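(* Let $T_1,T_2$ be rooted trees on leaf set $[n]$. The following three numbers are equal: (1) the dimension of the cone $K_{T_1}+K_{T_2}\subseteq\mathbb{R}^{\binom{[n]}{2}}$; (2) the rank of the graphic matroid of the clade graph $G_{T_1,T_2}$, i.e. its number of vertices minus its number of connected components; (3) the cardinality $|\mathrm{clade}(T_1)\cup\mathrm{clade}(T_2)|$.
   Context: A rooted tree on leaf set $[n]$ has leaves labeled bijectively by $[n]$ and internal vertices each with at least two children. A clade of $T$ is the set of leaves below an internal vertex; $\mathrm{clade}(T)$ is the set of clades (including $[n]$). For $S\subseteq[n]$, $c_T(S)$ denotes the smallest clade of $T$ containing $S$. The clade graph $G_{T_1,T_2}$ is the bipartite multigraph whose vertex set is the disjoint union of $\mathrm{clade}(T_1)$ and $\mathrm{clade}(T_2)$ and which has, for each pair $1\le i<j\le n$, an edge $e_{ij}$ joining $c_{T_1}(\{i,j\})$ to $c_{T_2}(\{i,j\})$. An ultrametric is $\delta\in\mathbb{R}^{\binom{[n]}{2}}$ with $\delta_{uv}\le\max\{\delta_{uw},\delta_{vw}\}$ for all distinct $u,v,w$. $K_T$ is the closed cone of ultrametrics with topology $T$: the set of $\delta$ such that there are real weights on the internal vertices of $T$, weakly increasing along every path toward the root, with $\delta_{uv}$ equal to the weight of the most recent common ancestor (internal vertex on the $u$–$v$ path closest to the root) of $u$ and $v$. $K_{T_1}+K_{T_2}$ is the Minkowski sum. *)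

(* Defs.v *)
From HB Require Import structures.
From mathcomp Require Import all_boot all_order all_algebra.
From mathcomp Require Import reals.
Set Implicit Arguments. Unset Strict Implicit. Unset Printing Implicit Defensive.
Import Order.TTheory GRing.Theory Num.Theory.
Local Open Scope ring_scope.

(* Index set of R^{binom [n] 2}: pairs (i,j) with i < j. *)
Definition lpair (n : nat) := {p : 'I_n * 'I_n | (p.1 < p.2)%N}.

Definition dissim (R : realType) (n : nat) := {ffun lpair n -> R^o}.

(* A rooted tree on leaf set [n] (internal vertices with >= 2 children) is
   encoded by its set of clades: a hierarchy on [n] containing [n], all of
   whose members have at least two elements, and any two of which are
   nested or disjoint.  This is in bijection with such trees. *)
Definition is_rooted_tree (n : nat) (H : {set {set 'I_n}}) : Prop :=
  [/\ [set: 'I_n] \in H,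
      (forall C, C \in H -> 2 <= #|C|)%N &
      (forall A B, A \in H -> B \in H ->
         [\/ A \subset B, B \subset A | [disjoint A & B]])].

(* c_T(S): the smallest clade of T containing S (the intersection of all
   clades containing S, which is a clade since [n] is one and clades are
   laminar). *)
Definition cladeof (n : nat) (H : {set {set 'I_n}}) (S : {set 'I_n}) :
  {set 'I_n} := \bigcap_(C in H | S \subset C) C.

Definition pair_set (n : nat) (p : lpair n) : {set 'I_n} :=
  [set (val p).1; (val p).2].

(* K_T: ultrametrics with topology T.  delta is in K_T iff there are real
   weights w on the internal vertices (= clades), weakly increasing toward
   the root (i.e. monotone w.r.t. inclusion of clades), with delta_{uv} equal
   to the weight of the mrca of u and v, i.e. of c_T({u,v}). *)
Definition K_T (R : realType) (n : nat) (H : {set {set 'I_n}}) :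
  dissim R n -> Prop :=
  fun delta => exists w : {set 'I_n} -> R,
    (forall A B, A \in H -> B \in H -> A \subset B -> w A <= w B) /\
    (forall p : lpair n, delta p = w (cladeof H (pair_set p))).

Definition minkowski_sum (R : realType) (n : nat) (K1 K2 : dissim R n -> Prop) :
  dissim R n -> Prop :=
  fun d => exists a b, [/\ K1 a, K2 b & d = a + b].

(* Dimension of (the linear span of) a subset S of a finite-dimensional
   vector space: S has dimension d iff some finite family s of elements of S
   spans S and \dim <<s>> = d.  (For a cone containing 0 this is the
   dimension of its affine hull.) *)
Definition has_dim (R : realType) (n : nat) (S : dissim R n -> Prop) (d : nat) : Prop :=
  exists s : seq (dissim R n),
    [/\ (forall v, v \in s -> S v),
        (forall v, S v -> v \in <<s>>%VS) &
        \dim <<s>>%VS = d].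

(* The clade graph G_{T1,T2}: vertices are inl C (C a clade of T1) and
   inr C (C a clade of T2); for every pair i<j there is an edge e_ij from
   inl c_T1({i,j}) to inr c_T2({i,j}).  Multiplicities do not affect the
   connected components, so we record the (symmetric) adjacency relation. *)
Definition cg_vertex (n : nat) := ({set 'I_n} + {set 'I_n})%type.

Definition cg_vertices (n : nat) (H1 H2 : {set {set 'I_n}}) : {set cg_vertex n} :=
  [set inl C | C in H1] :|: [set inr C | C in H2].

Definition cg_adj (n : nat) (H1 H2 : {set {set 'I_n}}) : rel (cg_vertex n) :=
  fun x y => [exists p : lpair n,
    ((x == inl (cladeof H1 (pair_set p))) && (y == inr (cladeof H2 (pair_set p))))
    || ((x == inr (cladeof H2 (pair_set p))) && (y == inl (cladeof H1 (pair_set p))))].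

Definition clade_graph_rank (n : nat) (H1 H2 : {set {set 'I_n}}) : nat :=
  (#|cg_vertices H1 H2| - n_comp (cg_adj H1 H2) (mem (cg_vertices H1 H2)))%N.

(* Main.v *)
Require Import Defs.
From HB Require Import structures.
From mathcomp Require Import all_boot all_order all_algebra.
From mathcomp Require Import reals.
From Stdlib Require Import Classical.
From mathcomp Require Import zify.
Set Implicit Arguments. Unset Strict Implicit. Unset Printing Implicit Defensive.
Import Order.TTheory GRing.Theory Num.Theory.

Section Comb.
Variable n : nat.
Implicit Types (H : {set {set 'I_n}}) (A B C D S : {set 'I_n}).

Definition lam H := forall A B, A \in H -> B \in H ->
         [\/ A \subset B, B \subset A | [disjoint A & B]].

Definition Rel H A x y := exists2 D, D \in H & [/\ x \in D, y \in D & ~~ (A \subset D)].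

Lemma disj_mem A B x : [disjoint A & B] -> x \in A -> x \in B -> False.
Proof.
move=> dAB xA xB; move: dAB; rewrite -setI_eq0 => /eqP h.
by have := in_setI x A B; rewrite xA xB h inE.
Qed.

Lemma Rel_sym H A x y : Rel H A x y -> Rel H A y x.
Proof. by case=> D HD [? ? ?]; exists D. Qed.

Lemma Rel_trans H A x y z : lam H -> Rel H A x y -> Rel H A y z -> Rel H A x z.
Proof.
move=> lH [D HD [xD yD nD]] [D' HD' [yD' zD' nD']].
case: (lH D D' HD HD') => [sub|sub|dis].
- by exists D' => //; split => //; apply: (subsetP sub).
- by exists D => //; split => //; apply: (subsetP sub).
- by case: (disj_mem dis yD yD').
Qed.

Lemma Lnot H A x : lam H -> x \in A -> (1 < #|A|)%N ->
  ~ (forall y, y \in A -> y != x -> Rel H A x y).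
Proof.
move=> lH xA cA hyp.
have: (0 < #|A :\ x|)%N by move: cA; rewrite (cardsD1 x A) xA add1n ltnS.
case/card_gt0P => y0 /setD1P [y0x y0A].
pose F := [set D in H | (x \in D) && ~~ (A \subset D)].
have [D0 HD0 [xD0 _ nD0]] := hyp y0 y0A y0x.
have F0 : D0 \in F by rewrite inE HD0 xD0 nD0.
case: (arg_maxnP (fun D => #|D|) F0) => Dm FDm maxDm.
have : Dm \in F by exact: FDm.
rewrite inE => /and3P[HDm xDm nDm].
move/negP: nDm; apply; apply/subsetP => y yA.
have [/eqP -> //|yx] := boolP (y == x).
have [Dy HDy [xDy yDy nDy]] := hyp y yA yx.
have FDy : Dy \in F by rewrite inE HDy xDy nDy.
case: (lH Dy Dm HDy HDm) => [sub|sub|dis].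
- exact: (subsetP sub).
- have := maxDm Dy FDy => le.
  have /eqP -> // : Dm == Dy by rewrite eqEcard sub; exact: le.
- by case: (disj_mem dis xDy xDm).
Qed.

Lemma pair_exists H1 H2 A : lam H1 -> lam H2 -> (1 < #|A|)%N ->
  exists i j, [/\ i \in A, j \in A, i != j &
    forall D, (D \in H1) || (D \in H2) -> i \in D -> j \in D -> A \subset D].
Proof.
move=> l1 l2 cA; apply: NNPP => nEx.
have dich : forall i j, i \in A -> j \in A -> i != j -> Rel H1 A i j \/ Rel H2 A i j.
  move=> i j iA jA ij; apply: NNPP => nR; apply: nEx; exists i, j; split => //.
  move=> D /orP HD iD jD; case: (boolP (A \subset D)) => // nAD; exfalso; apply: nR.
  by case: HD => HD; [left|right]; exists D.
have : (0 < #|A|)%N by apply: ltn_trans cA.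
case/card_gt0P => x xA.
have [z [zA zx nR1]] : exists z, [/\ z \in A, z != x & ~ Rel H1 A x z].
  apply: NNPP => nz; apply: (Lnot l1 xA cA) => y yA yx; apply: NNPP => nR.
  by apply: nz; exists y.
have R2xz : Rel H2 A x z.
  by case: (dich x z xA zA); [rewrite eq_sym|move=> h; case: nR1|].
apply: (Lnot l2 xA cA) => y yA yx.
case: (classic (Rel H1 A x y)) => r1.
- have yz : y != z by apply/eqP => yz; apply: nR1; rewrite -yz.
  have nr : ~ Rel H1 A y z by move=> r; apply: nR1; apply: Rel_trans r.
  case: (dich y z yA zA yz) => // r2.
  exact: Rel_trans R2xz (Rel_sym r2).
- by case: (dich x y xA yA); rewrite 1?eq_sym.
Qed.

Lemma pairP H1 H2 A : lam H1 -> lam H2 -> (1 < #|A|)%N ->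
  exists p : lpair n, pair_set p \subset A /\
    forall D, (D \in H1) || (D \in H2) -> pair_set p \subset D -> A \subset D.
Proof.
move=> l1 l2 cA; have [i [j [iA jA ij hD]]] := pair_exists l1 l2 cA.
case: (ltngtP i j) => [lt|lt|eq].
- exists (exist _ (i, j) lt); rewrite /pair_set /= subUset !sub1set iA jA; split => //.
  by move=> D HD; rewrite subUset !sub1set => /andP[iD jD]; apply: hD.
- exists (exist _ (j, i) lt); rewrite /pair_set /= subUset !sub1set iA jA; split => //.
  by move=> D HD; rewrite subUset !sub1set => /andP[jD iD]; apply: hD.
- by move/eqP: ij; case; apply: val_inj.
Qed.

Lemma cladeof_sup H S : [set: 'I_n] \in H -> S \subset cladeof H S.
Proof. by move=> _; apply/bigcapsP => C /andP[]. Qed.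

Lemma cladeof_sub H S C : [set: 'I_n] \in H -> C \in H ->
  (cladeof H S \subset C) = (S \subset C).
Proof.
move=> HT HC; apply/idP/idP => h.
- exact: subset_trans (cladeof_sup S HT) h.
- by apply: (bigcap_inf C); rewrite HC h.
Qed.

Lemma cladeof_id H C : C \in H -> cladeof H C = C.
Proof.
move=> HC; apply/eqP; rewrite eqEsubset; apply/andP; split.
- by apply: (bigcap_inf C); rewrite HC subxx.
- by apply/bigcapsP => D /andP[].
Qed.

Lemma cladeof_eq H S S' : (forall C, C \in H -> (S \subset C) = (S' \subset C)) ->
  cladeof H S = cladeof H S'.
Proof.
move=> h; rewrite /cladeof; apply: eq_bigl => C.
by case: (boolP (C \in H)) => //= HC; rewrite h.
Qed.

Lemma cladeof_in H S : is_rooted_tree H -> S != set0 -> cladeof H S \in H.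
Proof.
case=> HT _ lH /set0Pn [x xS].
pose F := [set C in H | S \subset C].
have F0 : [set: 'I_n] \in F by rewrite inE HT subsetT.
case: (arg_minnP (fun D => #|D|) F0) => Cm FCm minC.
have : Cm \in F by exact: FCm.
rewrite inE => /andP[HCm SCm].
suff -> : cladeof H S = Cm by [].
apply/eqP; rewrite eqEsubset; apply/andP; split.
- by apply: (bigcap_inf Cm); rewrite HCm SCm.
- apply/bigcapsP => D /andP[HD SD].
  have FD : D \in F by rewrite inE HD SD.
  case: (lH Cm D HCm HD) => [//|sub|dis].
  + have /eqP -> // : D == Cm by rewrite eqEcard sub; exact: minC.
  + by case: (disj_mem dis (subsetP SCm x xS) (subsetP SD x xS)).
Qed.
End Comb.

Section Graph.
Variable n : nat.
Variables H1 H2 : {set {set 'I_n}}.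
Hypothesis t1 : is_rooted_tree H1.
Hypothesis t2 : is_rooted_tree H2.
Implicit Types (H : {set {set 'I_n}}) (A B C D S : {set 'I_n}).
Local Notation e := (cg_adj H1 H2).
Local Notation V := (cg_vertices H1 H2).

Lemma lam_of H : is_rooted_tree H -> lam H.
Proof. by case. Qed.

Lemma card2 H C : is_rooted_tree H -> C \in H -> (1 < #|C|)%N.
Proof. by case=> _ h _ /h. Qed.

Lemma setT_in H : is_rooted_tree H -> [set: 'I_n] \in H.
Proof. by case. Qed.

Lemma edge S : (1 < #|S|)%N ->
  e (inl (cladeof H1 S)) (inr (cladeof H2 S)) /\ e (inr (cladeof H2 S)) (inl (cladeof H1 S)).
Proof.
move=> cS; have [p [pS hD]] := pairP (lam_of t1) (lam_of t2) cS.
have eq : forall H, (H = H1 \/ H = H2) -> cladeof H (pair_set p) = cladeof H S.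
  move=> H HH; apply: cladeof_eq => C HC; apply/idP/idP => h.
  - by apply: hD h; case: HH HC => -> ->; rewrite ?orbT.
  - exact: subset_trans pS h.
split; apply/existsP; exists p; rewrite !eq ?eqxx ?orbT //; by [left|right].
Qed.

Lemma e_sym : symmetric e.
Proof.
move=> x y; rewrite /cg_adj /=; apply: eq_existsb => p.
by case: (x == inl _); case: (y == inr _); case: (x == inr _); case: (y == inl _).
Qed.

Lemma inlV C : (inl C \in V) = (C \in H1).
Proof.
rewrite /cg_vertices inE; apply/orP/idP.
- by case=> /imsetP [D HD E]; [injection E as ->|discriminate E].
- by move=> h; left; apply: imset_f.
Qed.

Lemma inrV C : (inr C \in V) = (C \in H2).
Proof.
rewrite /cg_vertices inE; apply/orP/idP.
- by case=> /imsetP [D HD E]; [discriminate E|injection E as ->].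
- by move=> h; right; apply: imset_f.
Qed.

Lemma pair_ne0 (p : lpair n) : pair_set p != set0.
Proof. by apply/set0Pn; exists (val p).1; rewrite /pair_set !inE eqxx. Qed.

Lemma e_V x y : e x y -> x \in V /\ y \in V.
Proof.
case/existsP => p /orP [] /andP [/eqP -> /eqP ->];
  by rewrite ?inlV ?inrV !cladeof_in // pair_ne0.
Qed.

Lemma Vclosed : closed e V.
Proof. by move=> x y /e_V [-> ->]. Qed.

Lemma csym : connect_sym e.
Proof. exact: sym_connect_sym e_sym. Qed.

Lemma key A : A \in H1 -> A \notin H2 ->
  (exists2 A', A' \in H1 & (#|A| < #|A'|)%N /\ connect e (inl A) (inl A')) \/
  (exists2 C, C \in H1 :&: H2 & connect e (inl A) (inl C)).
Proof.
move=> HA nHA.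
have cA := card2 t1 HA.
have A0 : A != set0 by apply/set0Pn; move/card_gt0P: (ltnW cA).
set B := cladeof H2 A.
have HB : B \in H2 by apply: cladeof_in.
have AB : A \subset B by apply: cladeof_sup; apply: setT_in.
have ltAB : (#|A| < #|B|)%N.
  apply: proper_card; rewrite properE AB /=; apply/negP => BA.
  have : A == B by rewrite eqEsubset AB BA.
  by move/eqP => eAB; move: nHA; rewrite eAB HB.
have cB : (1 < #|B|)%N by apply: ltn_trans ltAB.
have eAB : e (inl A) (inr B) by have [+ _] := edge cA; rewrite cladeof_id.
case: (boolP (B \in H1)) => HB1.
- right; exists B; first by rewrite inE HB1 HB.
  apply: connect_trans (connect1 eAB) (connect1 _).
  by have [_ +] := edge cB; rewrite !cladeof_id.
- left; set A' := cladeof H1 B.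
  have HA' : A' \in H1 by apply: cladeof_in => //; apply/set0Pn; move/card_gt0P: (ltnW cB).
  have BA' : B \subset A' by apply: cladeof_sup; apply: setT_in.
  have ltBA : (#|B| < #|A'|)%N.
    apply: proper_card; rewrite properE BA' /=; apply/negP => AB'.
    have : B == A' by rewrite eqEsubset BA' AB'.
    by move/eqP => eBA; move: HB1; rewrite eBA HA'.
  exists A' => //; split; first exact: ltn_trans ltBA.
  apply: connect_trans (connect1 eAB) (connect1 _).
  by have [_ +] := edge cB; rewrite (cladeof_id HB).
Qed.

Lemma path_l m A : (n - #|A| <= m)%N -> A \in H1 ->
  exists2 C, C \in H1 :&: H2 & connect e (inl A) (inl C).
Proof.
elim: m A => [|m IH] A hm HA; (case: (boolP (A \in H2)) => HA2;
  [by exists A; rewrite ?inE ?HA ?HA2 ?connect0 |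
   case: (key HA HA2) => [[A' HA' [lt c]] | //]]).
- have : (#|A'| <= n)%N by rewrite -[X in (_ <= X)%N]card_ord max_card.
  lia.
- have [C HC c'] : exists2 C, C \in H1 :&: H2 & connect e (inl A') (inl C).
    apply: IH HA'.
    have : (#|A'| <= n)%N by rewrite -[X in (_ <= X)%N]card_ord max_card.
    lia.
  by exists C => //; apply: connect_trans c c'.
Qed.

Lemma vert v : v \in V -> exists2 C, C \in H1 :&: H2 & connect e v (inl C).
Proof.
case: v => [A|B]; first by rewrite inlV; apply: path_l (leqnn _).
rewrite inrV => HB.
have cB := card2 t2 HB.
case: (boolP (B \in H1)) => HB1.
- exists B; first by rewrite inE HB1 HB.
  by apply: connect1; have [_ +] := edge cB; rewrite !cladeof_id.
- set A' := cladeof H1 B.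
  have HA' : A' \in H1 by apply: cladeof_in => //; apply/set0Pn; move/card_gt0P: (ltnW cB).
  have [C HC c] := path_l (leqnn _) HA'.
  exists C => //; apply: connect_trans (connect1 _) c.
  by have [_ +] := edge cB; rewrite (cladeof_id HB).
Qed.

Definition FC C : pred (cg_vertex n) :=
  fun v => match v with inl A => A \subset C | inr A => A \subset C end.

Lemma FC_closed C : C \in H1 :&: H2 -> closed e (FC C).
Proof.
rewrite inE => /andP [C1 C2] x y.
case/existsP => p /orP [] /andP [/eqP -> /eqP ->];
  by rewrite /in_mem /= !cladeof_sub // setT_in.
Qed.

Lemma ncomp_eq : n_comp e V = #|H1 :&: H2|.
Proof.
rewrite /n_comp_mem.
have inj : {in H1 :&: H2 &, injective (fun C => fingraph.root e (inl C))}.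
  move=> C C' HC HC' /(fingraph.rootP csym) c.
  have h1 := closed_connect (FC_closed HC) c.
  have h2 := closed_connect (FC_closed HC') c.
  move: h1 h2; rewrite /in_mem /= subxx => h1 h2.
  by apply/eqP; rewrite eqEsubset -h1 h2 subxx.
rewrite -(card_in_imset inj); apply: eq_card => r.
rewrite inE; apply/andP/imsetP.
- case=> rr rV; have [C HC c] := vert (rV : r \in V).
  exists C => //; rewrite -(eqP rr); exact/(fingraph.rootP csym).
- case=> C HC ->; split; first exact: fingraph.roots_root csym _.
  suff h : fingraph.root e (inl C) \in V by exact: h.
  have <- := closed_connect Vclosed (connect_root e (inl C)).
  by rewrite inlV; move: HC; rewrite inE => /andP[].
Qed.

Lemma rank_eq : clade_graph_rank H1 H2 = #|H1 :|: H2|.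
Proof.
rewrite /clade_graph_rank ncomp_eq.
have cV : #|V| = (#|H1| + #|H2|)%N.
  rewrite /cg_vertices cardsU !card_imset; try (by move=> ? ? []).
  suff -> : [set inl C | C in H1] :&: [set inr C | C in H2] = set0 :> {set cg_vertex n}.
    by rewrite cards0 subn0.
  apply/setP => x; rewrite !inE; apply/negP => /andP [/imsetP [? _ ->] /imsetP [? _ //]].
have := cardsUI H1 H2; rewrite cV; lia.
Qed.
End Graph.

Section LA.
Variable R : realType.
Variable n : nat.
Variables H1 H2 : {set {set 'I_n}}.
Hypothesis t1 : is_rooted_tree H1.
Hypothesis t2 : is_rooted_tree H2.
Implicit Types (H F : {set {set 'I_n}}) (A B C D S : {set 'I_n}).
Local Open Scope ring_scope.

Definition nchi C : dissim R n := [ffun p => if pair_set p \subset C then -1 else 0].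
Definition ecl H C : dissim R n := [ffun p => if cladeof H (pair_set p) == C then 1 else 0].
Definition sq F := [seq nchi C | C <- enum F].

Lemma free_sq F : F \subset H1 :|: H2 -> free (sq F).
Proof.
move=> FU; suff : free (in_tuple (sq F)) by []. apply/freeP => k /= ks i.
have sz : size (sq F) = size (enum F) by rewrite size_map.
have nthE : forall j : 'I_(size (sq F)), (sq F)`_j = nchi (nth set0 (enum F) j).
  by move=> j; rewrite (nth_map set0) // -sz.
have inU : forall j : 'I_(size (sq F)), nth set0 (enum F) j \in H1 :|: H2.
  move=> j; apply: (subsetP FU); rewrite -mem_enum; apply: mem_nth; rewrite -sz.
  exact: ltn_ord.
apply: NNPP => ki.
pose G := [set j : 'I_(size (sq F)) | k j != 0].
have Gi : i \in G by rewrite inE; apply/eqP.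
case: (arg_maxnP (fun j : 'I_(size (sq F)) => #|nth set0 (enum F) j|) Gi) => m Gm maxm.
have : m \in G by exact: Gm.
rewrite inE => km.
set C0 := nth set0 (enum F) m.
have cC0 : (1 < #|C0|)%N.
  by have := inU m; rewrite inE => /orP [] h; [apply: (card2 t1 h)|apply: (card2 t2 h)].
have [p [pC hD]] := pairP (lam_of t1) (lam_of t2) cC0.
have := congr1 (fun f : dissim R n => f p) ks; rewrite sum_ffunE ffunE (bigD1 m) //= big1.
- rewrite nthE !ffunE pC addr0 => /eqP.
  by change (k m * -1 == 0 -> False); rewrite mulrN1 oppr_eq0 (negPf km).
move=> j jm; rewrite !ffunE nthE ffunE.
case: (boolP (k j == 0)) => [/eqP -> |kj]; first by rewrite scale0r.
case: ifP => pj; last by rewrite scaler0.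
exfalso; move/negP: jm; apply.
have Cj : nth set0 (enum F) j \in H1 :|: H2 := inU j.
have sub : C0 \subset nth set0 (enum F) j by apply: hD pj; rewrite -in_setU.
have le := maxm j (_ : j \in G).
have eqC : C0 == nth set0 (enum F) j.
  by rewrite eqEcard sub; apply: le; rewrite inE.
have jl : (j < size (enum F))%N by rewrite -sz.
have ml : (m < size (enum F))%N by rewrite -sz.
rewrite -val_eqE /= -(nth_uniq set0 jl ml (enum_uniq (mem F))).
by rewrite eq_sym.
Qed.

Lemma nchi_K H C : is_rooted_tree H -> C \in H -> K_T H (nchi C).
Proof.
move=> tH HC; exists (fun D => if D \subset C then -1 else 0); split.
- move=> A B _ _ AB; case: (boolP (B \subset C)) => BC.
  + by rewrite (subset_trans AB BC).
  + by case: (A \subset C); rewrite ?lerN10.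
- by move=> p; rewrite ffunE cladeof_sub // setT_in.
Qed.

Lemma zero_K H : K_T H (0 : dissim R n).
Proof. by exists (fun _ => 0); split => [*|p]; rewrite ?ffunE. Qed.

Lemma K_span H : is_rooted_tree H -> H \subset H1 :|: H2 -> forall d, K_T H d ->
  d \in <<sq (H1 :|: H2)>>%VS.
Proof.
move=> tH HU d [w [_ dw]].
pose eS := [seq ecl H C | C <- enum H].
have cin : forall p : lpair n, cladeof H (pair_set p) \in H.
  by move=> p; apply: cladeof_in => //; apply: pair_ne0.
have d_in : d \in <<eS>>%VS.
  have -> : d = \sum_(C in H) w C *: ecl H C.
    apply/ffunP => p; rewrite sum_ffunE dw (bigD1 (cladeof H (pair_set p))) //=.
    rewrite big1 ?addr0.
    + by rewrite !ffunE eqxx; symmetry; apply: mulr1.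
    + by move=> C /andP [_ nC]; rewrite !ffunE eq_sym (negPf nC); apply: mulr0.
  apply: memv_suml => C HC; apply: memvZ; apply: memv_span; apply: map_f.
  by rewrite mem_enum.
have sub1 : (<<sq H>> <= <<eS>>)%VS.
  apply/span_subvP => v /mapP [C]; rewrite mem_enum => HC ->.
  have -> : nchi C = \sum_(D in H | D \subset C) (-1) *: ecl H D.
    apply/ffunP => p; rewrite sum_ffunE ffunE -(cladeof_sub _ (setT_in tH) HC).
    case: ifP => cpC.
    + rewrite (bigD1 (cladeof H (pair_set p))) /=; last by rewrite cin cpC.
      rewrite big1 ?addr0.
      * by rewrite !ffunE eqxx; symmetry; apply: mulr1.
      * by move=> D /andP [_ nD]; rewrite !ffunE eq_sym (negPf nD); apply: mulr0.
    + rewrite big1 // => D /andP [_ DC]; rewrite !ffunE.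
      case: eqP => [E|_]; last by apply: mulr0.
      by move: cpC; rewrite E DC.
  apply: memv_suml => D /andP [HD _]; apply: memvZ; apply: memv_span; apply: map_f.
  by rewrite mem_enum.
have dimsq : \dim <<sq H>> = size (sq H) by apply/eqP; apply: free_sq.
have eqS : (<<sq H>> == <<eS>>)%VS.
  rewrite eqEdim sub1 /= dimsq.
  by apply: leq_trans (dim_span _) _; rewrite !size_map.
have : d \in <<sq H>>%VS by rewrite (eqP eqS).
apply/subvP; apply: sub_span => v /mapP [C]; rewrite mem_enum => HC ->.
by apply: map_f; rewrite mem_enum (subsetP HU).
Qed.

Theorem main :
  has_dim (minkowski_sum (@K_T R n H1) (@K_T R n H2)) (clade_graph_rank H1 H2) /\
  clade_graph_rank H1 H2 = #|H1 :|: H2|.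
Proof.
split; last exact: (rank_eq t1 t2).
rewrite (rank_eq t1 t2) /has_dim. exists (sq (H1 :|: H2)). split.

- move=> v /mapP [C]; rewrite mem_enum inE => /orP [] HC ->.
  + by exists (nchi C), 0; split; [apply: nchi_K|apply: zero_K|rewrite addr0].
  + by exists 0, (nchi C); split; [apply: zero_K|apply: nchi_K|rewrite add0r].
- move=> v [a [b [Ka Kb ->]]]; apply: memvD.
  + by apply: (K_span t1 _ Ka); apply: subsetUl.
  + by apply: (K_span t2 _ Kb); apply: subsetUr.
- by rewrite (eqP (free_sq (subxx _))) size_map -cardE.
Qed.
End LA.

Unset Implicit Arguments.
Local Open Scope ring_scope.

Theorem proposition3p7 (R : realType) (n : nat) (H1 H2 : {set {set 'I_n}}) :
  is_rooted_tree H1 -> is_rooted_tree H2 ->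
  has_dim (minkowski_sum (@K_T R n H1) (@K_T R n H2)) (clade_graph_rank H1 H2) /\
  clade_graph_rank H1 H2 = #|H1 :|: H2|.
Proof.
move=> t1 t2; exact: (main R t1 t2).
Qed.
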